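(* Let $T$ be a c.n.u. contraction on $H$ and suppose $t:=T|_{\mathbb{K}^\perp}\in\mathbb{B}(\mathbb{K}^\perp,\mathbb{K}_*^\perp)$ satisfies $\|t\|<1$. Define $\Gamma'_\pm$ on $A_T^{\perp_s}$ by $$\Gamma'_+=(I-t^*t)^{-1/2}\Gamma_+-t^*(I-tt^* )^{-1/2}\Gamma_-,\qquad \Gamma'_-=t(I-t^*t)^{-1/2}\Gamma_+-(I-tt^* )^{-1/2}\Gamma_-.$$ Then the contractive Weyl function with respect to $(\mathbb{K}^\perp,\mathbb{K}_*^\perp,\Gamma'_+,\Gamma'_-)$ is $B'(\lambda)=-\Theta_T(\lambda)$; that is, for every $\lambda\in\mathbb{D}$ and every $a\in N_\lambda=\{(x,\lambda x):x\in H\}\cap A_T^{\perp_s}$, $$\Gamma'_-a=\big(T-\lambda\mathfrak{D}_*(I-\lambda T^* )^{-1}\mathfrak{D}\big)\big|_{\mathbb{K}^\perp}\,\Gamma'_+a.$$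
   Context: $H$ is an infinite-dimensional separable complex Hilbert space; $T\in\mathbb{B}(H)$, $\|T\|\le1$, is completely non-unitary (no nonzero invariant subspace on which $T$ is unitary). $\mathbb{K}=\ker(I-T^*T)$, $\mathbb{K}_*=\ker(I-TT^* )$; $T$ maps $\mathbb{K}^\perp$ into $\mathbb{K}_*^\perp$. $\mathfrak{D}=(I-T^*T)^{1/2}$, $\mathfrak{D}_*=(I-TT^* )^{1/2}$, and the Sz.-Nagy–Foias characteristic function is $\Theta_T(\lambda)=(-T+\lambda\mathfrak{D}_*(I-\lambda T^* )^{-1}\mathfrak{D})|_{\mathbb{K}^\perp}$, $\lambda\in\mathbb{D}$ (open unit disc). $\mathbb{H}=H\oplus_\perp H$ with $[(x_1,x_2),(y_1,y_2)]=i(x_1,y_1)_H-i(x_2,y_2)_H$; $S^{\perp_s}=\{a:[a,b]=0\ \forall b\in S\}$; $A_T=\{(x,Tx):x\in\mathbb{K}\}$. Every $a\in A_T^{\perp_s}$ decomposes uniquely as $a=(x_0,Tx_0)+(a_+,0)+(0,a_-)$ with $x_0\in\mathbb{K}$, $a_+\in\mathbb{K}^\perp$, $a_-\in\mathbb{K}_*^\perp$; the canonical boundary maps are $\Gamma_+a=a_+$, $\Gamma_-a=a_-$. *)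

(* Defs.v *)
From HB Require Import structures.
From mathcomp Require Import all_boot all_order all_algebra.
From mathcomp Require Import complex.
From mathcomp Require Import all_classical all_reals all_analysis.
Set Implicit Arguments. Unset Strict Implicit. Unset Printing Implicit Defensive.
Import Order.TTheory GRing.Theory Num.Theory.
Import numFieldNormedType.Exports.
Local Open Scope classical_set_scope.
Local Open Scope ring_scope.

Section HilbertDefs.
Variable R : realType.
Local Notation C := R[i].
Variable H : completeNormedModType C.

(* ip is an inner product (linear in the first argument, conjugate symmetric)
   inducing the norm of H:  |x|^2 = (x,x).  Together with completeness of H
   this makes H a complex Hilbert space. *)
Definition is_inner_product (ip : H -> H -> C) : Prop :=
  [/\ forall (a : C) (x y z : H), ip (a *: x + y) z = a * ip x z + ip y z,
      forall x y : H, ip y x = Num.conj (ip x y)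
    & forall x : H, `|x| ^+ 2 = ip x x].

Definition separable_space : Prop :=
  exists f : nat -> H, closure (range f) = setT.

Definition infinite_dimensional : Prop :=
  forall s : seq H, exists x : H,
    ~ exists c : 'I_(size s) -> C, x = \sum_(i < size s) c i *: s`_i.

Definition closed_subspace (M : set H) : Prop :=
  [/\ closed M, M 0,
      forall x y, M x -> M y -> M (x + y)
    & forall (a : C) x, M x -> M (a *: x)].

Definition orth (ip : H -> H -> C) (S : set H) : set H :=
  [set x | forall y, S y -> ip x y = 0].

Definition cnu (T : H -> H) : Prop :=
  forall M : set H, closed_subspace M ->
    (forall x, M x -> M (T x)) ->
    (forall x, M x -> `|T x| = `|x|) ->
    (forall y, M y -> exists2 x, M x & T x = y) ->
    M = [set 0].

Definition is_adjoint (ip : H -> H -> C) (B Bs : H -> H) : Prop :=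
  forall x y, ip (B x) y = ip x (Bs y).

Definition is_pos_sqrt_on (ip : H -> H -> C) (M : set H) (A S : H -> H) : Prop :=
  [/\ forall x, M x -> M (S x),
      forall x y, M x -> M y -> ip (S x) y = ip x (S y),
      forall x, M x -> 0 <= ip (S x) x
    & forall x, M x -> S (S x) = A x].

Definition is_inverse_on (M : set H) (S Si : H -> H) : Prop :=
  [/\ forall x, M x -> M (Si x),
      forall x, M x -> S (Si x) = x
    & forall x, M x -> Si (S x) = x].

End HilbertDefs.

(* Krein-space indefinite form on H (+) H *)
Definition sympl (R : realType) (H : completeNormedModType R[i])
  (ip : H -> H -> R[i]) (a b : H * H) : R[i] :=
  'i * ip a.1 b.1 - 'i * ip a.2 b.2.

(* Main.v *)
From Pilot Require Import Defs.
From HB Require Import structures.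
From mathcomp Require Import all_boot all_order all_algebra.
From mathcomp Require Import complex.
From mathcomp Require Import all_classical all_reals all_analysis.
From mathcomp Require Import ring lra.
Import Order.TTheory GRing.Theory Num.Theory.
Import numFieldNormedType.Exports.
Local Open Scope classical_set_scope.
Local Open Scope ring_scope.

Module PilotAux.
Set Implicit Arguments. Unset Strict Implicit.
Section Hilb.
Variable R : realType.
Local Notation C := R[i].
Variable H : completeNormedModType C.
Variable ip : H -> H -> C.
Hypothesis Hip : is_inner_product ip.

Definition re (z : C) : R := complex.Re z.
Lemma reD z w : re (z + w) = re z + re w.
Proof. by case: z => a b; case: w => c d. Qed.
Lemma reN z : re (- z) = - re z.
Proof. by case: z. Qed.
Lemma reB z w : re (z - w) = re z - re w.
Proof. by rewrite reD reN. Qed.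
Lemma reJ z : re (Num.conj z) = re z.
Proof. by case: z. Qed.
Lemma re0 : re 0 = 0.
Proof. by []. Qed.
Lemma re_le z w : z <= w -> re z <= re w.
Proof. by rewrite lecE => /andP[]. Qed.
Lemma re_ge0 z : 0 <= z -> 0 <= re z.
Proof. exact: re_le. Qed.
Lemma reM_real (r : R) z : re ((r%:C)%C * z) = r * re z.
Proof. case: z => a b /=. by rewrite mul0r subr0. Qed.

Lemma ipL a x y z : ip (a *: x + y) z = a * ip x z + ip y z.
Proof. by case: Hip. Qed.
Lemma ipC x y : ip y x = Num.conj (ip x y).
Proof. by case: Hip. Qed.
Lemma ipxx x : `|x| ^+ 2 = ip x x.
Proof. by case: Hip. Qed.

Lemma ipDl x y z : ip (x + y) z = ip x z + ip y z.
Proof. by rewrite -[x]scale1r ipL mul1r scale1r. Qed.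
Lemma ip0l z : ip 0 z = 0.
Proof.
have := ipDl 0 0 z; rewrite addr0 => /eqP.
by rewrite -subr_eq0 opprD addrA subrr add0r oppr_eq0 => /eqP.
Qed.
Lemma ipZl a x z : ip (a *: x) z = a * ip x z.
Proof. by rewrite -[a *: x]addr0 ipL ip0l addr0. Qed.
Lemma ipNl x z : ip (- x) z = - ip x z.
Proof. by rewrite -scaleN1r ipZl mulN1r. Qed.
Lemma ipBl x y z : ip (x - y) z = ip x z - ip y z.
Proof. by rewrite ipDl ipNl. Qed.
Lemma ipDr x y z : ip x (y + z) = ip x y + ip x z.
Proof. by rewrite [ip x (y + z)]ipC [ip x y]ipC [ip x z]ipC ipDl rmorphD. Qed.
Lemma ipZr a x y : ip x (a *: y) = Num.conj a * ip x y.
Proof. by rewrite [ip x (a *: y)]ipC [ip x y]ipC ipZl rmorphM. Qed.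
Lemma ip0r x : ip x 0 = 0.
Proof. by rewrite ipC ip0l rmorph0. Qed.
Lemma ipNr x z : ip x (- z) = - ip x z.
Proof. by rewrite [ip x (- z)]ipC [ip x z]ipC ipNl rmorphN. Qed.
Lemma ipBr x y z : ip x (y - z) = ip x y - ip x z.
Proof. by rewrite ipDr ipNr. Qed.

Lemma ipxx0 x : ip x x = 0 -> x = 0.
Proof.
rewrite -ipxx => /eqP; rewrite expf_eq0 /= normr_eq0 => /eqP //.
Qed.

Lemma ext_M (M : set H) z : M z -> (forall w, M w -> ip z w = 0) -> z = 0.
Proof. by move=> Mz h; apply: ipxx0; apply: h. Qed.

Definition nq x := re (ip x x).
Definition rp x y := re (ip x y).
Lemma rpC x y : rp y x = rp x y.
Proof. by rewrite /rp ipC reJ. Qed.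
Lemma nq_ge0 x : 0 <= nq x.
Proof. by apply: re_ge0; rewrite -ipxx exprn_ge0. Qed.
Lemma nq0 x : nq x = 0 -> x = 0.
Proof.
move=> h; apply: ipxx0.
have hge : 0 <= ip x x by rewrite -ipxx exprn_ge0.
have := ger0_Im hge.
move: h; rewrite /nq /re; case: (ip x x) => a b /= -> ->. by [].
Qed.
Lemma nqD x y : nq (x + y) = nq x + nq y + 2 * rp x y.
Proof.
rewrite /nq /rp ipDl !ipDr !reD -/(rp x y) -/(rp y x) rpC /rp; lra.
Qed.
Lemma nqB x y : nq (x - y) = nq x + nq y - 2 * rp x y.
Proof.
rewrite /nq /rp ipBl !ipBr !reB -/(rp x y) -/(rp y x) rpC /rp; lra.
Qed.
Lemma nq_par x y : nq (x + y) <= 2 * nq x + 2 * nq y.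
Proof.
have := nq_ge0 (x - y); rewrite nqB nqD; lra.
Qed.
Lemma nqxx x : nq (x + x) = 4 * nq x.
Proof. rewrite nqD /rp -/(nq x); lra. Qed.

Lemma nq_le x y : `|x| <= `|y| -> nq x <= nq y.
Proof.
move=> h; apply: re_le; rewrite -!ipxx.
by rewrite lerXn2r // ?nnegrE.
Qed.

Lemma nqN x : nq (- x) = nq x.
Proof. by rewrite /nq ipNl ipNr opprK. Qed.
Lemma nq_norm x : nq x = (re `|x|) ^+ 2.
Proof.
rewrite /nq -ipxx.
have := ger0_Im (normr_ge0 x).
case: `|x| => a b /= ->. by rewrite mul0r subr0 expr2.
Qed.
Lemma zz1 (V : zmodType) (a b c d : V) : (a - b) - (c - d) = (a - c) - (b - d).
Proof. by rewrite !opprB addrACA [RHS]addrACA (addrC (- b)). Qed.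
Lemma zz2 (V : zmodType) (a b : V) : (a - b) + (b - a) = 0.
Proof. by rewrite addrA subrK subrr. Qed.

Definition subsp (M : set H) := forall a x y, M x -> M y -> M (a *: x + y).
Lemma subspD M x y : subsp M -> M x -> M y -> M (x + y).
Proof. by move=> h Mx My; rewrite -[x]scale1r; apply: h. Qed.
Lemma subspB M x y : subsp M -> M x -> M y -> M (x - y).
Proof. by move=> h Mx My; rewrite addrC -scaleN1r; apply: h. Qed.

Section SA.
Variables (M : set H) (S : H -> H).
Hypothesis hM : subsp M.
Hypothesis hSM : forall x, M x -> M (S x).
Hypothesis hsa : forall x y, M x -> M y -> ip (S x) y = ip x (S y).
Lemma sa_lin a x y : M x -> M y -> S (a *: x + y) = a *: S x + S y.
Proof.
move=> Mx My; apply/eqP; rewrite -subr_eq0; apply/eqP.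
have Mxy : M (a *: x + y) by apply: hM.
apply: (@ext_M M).
  apply: subspB => //; first by apply: hSM.
  by apply: hM; apply: hSM.
move=> w Mw; rewrite ipBl ipDl ipZl !hsa // ipL; exact: subrr.
Qed.
Lemma sa_add x y : M x -> M y -> S (x + y) = S x + S y.
Proof. by move=> Mx My; rewrite -{1}[x]scale1r sa_lin // scale1r. Qed.
Lemma sa_sub x y : M x -> M y -> S (x - y) = S x - S y.
Proof.
move=> Mx My; rewrite addrC -scaleN1r sa_lin // scaleN1r; exact: addrC.
Qed.
End SA.

Lemma ctr M P (rho : R) : subsp M -> (forall x, M x -> M (P x)) ->
  (forall x y, M x -> M y -> ip (P x) y = ip x (P y)) ->
  (forall x, M x -> 0 <= rp (P x) x) ->
  (forall u, M u -> nq (P u) <= nq u) ->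
  (forall u, M u -> nq u - nq (P u) <= rho * nq u) ->
  forall u, M u -> nq (u - P u) <= rho * nq u.
Proof.
move=> hM hPM hsa hpos hle hrho u Mu.
set z := P u.
have Mz : M z by apply: hPM.
have MPz : M (P z) by apply: hPM.
have h1 := hpos (u - z) (subspB hM Mu Mz).
rewrite (sa_sub hM hPM hsa Mu Mz) /rp ipBl !ipBr !reB in h1.
have e1 : ip (P z) u = ip z z by rewrite hsa.
rewrite e1 -/(rp z u) -/(rp (P z) z) -/(nq z) in h1.
have h2 := nq_ge0 (z - P z).
rewrite nqB rpC in h2.
have h3 := hle z Mz.
have h4 := hrho u Mu.
rewrite nqB rpC.
rewrite /rp /nq in h1 h2 h3 h4 *.
lra.
Qed.

Lemma geo0 (X Cc rho : R) : 0 <= rho < 1 -> (forall n, X <= Cc * rho ^+ n) -> X <= 0.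
Proof.
case/andP=> r0 r1 HX.
rewrite leNgt; apply/negP => X0.
have hc : geometric Cc rho n @[n --> \oo] --> 0.
  by apply: cvg_geometric; rewrite ger0_norm.
have := cvgr_lt _ hc _ X0.
case => N _ HN.
have := HN N (leqnn N) => /=.
by rewrite /geometric /= ltNge HX.
Qed.

Lemma sylv (M1 M2 : set H) (P Q Y : H -> H) (rho B : R) :
  0 <= rho < 1 -> 0 <= B ->
  (forall u, M1 u -> nq (u - P u) <= rho * nq u) ->
  (forall v, M2 v -> nq (v - Q v) <= rho * nq v) ->
  (forall v, M2 v -> M2 (Q v)) ->
  (forall u v, M2 u -> M2 v -> M2 (u - v)) ->
  (forall v, M2 v -> M1 (Y v)) ->
  (forall u v, M2 u -> M2 v -> Y (u - v) = Y u - Y v) ->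
  (forall v, M2 v -> nq (Y v) <= B * nq v) ->
  (forall v, M2 v -> P (Y v) + Y (Q v) = 0) ->
  forall v, M2 v -> Y v = 0.
Proof.
move=> hrho hB hP hQ hQM hMB hYM hYB hYb hsyl.
have ind : forall n v, M2 v -> nq (Y v) <= (B * rho ^+ n) * nq v.
  elim=> [|n IH] v Mv; first by rewrite expr0 mulr1; apply: hYb.
  have MQ := hQM v Mv.
  have e : Y v + Y v = (Y v - P (Y v)) + Y (v - Q v).
    have eQ : Y (Q v) = - P (Y v).
      by apply/eqP; rewrite -addr_eq0 addrC hsyl.
    by rewrite hYB // eQ opprK addrACA addNr addr0.
  have h1 := nq_par (Y v - P (Y v)) (Y (v - Q v)).
  rewrite -e nqxx in h1.
  have h2 := hP (Y v) (hYM v Mv).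
  have h3 := IH (v - Q v) (hMB _ _ Mv MQ).
  have h4 := hQ v Mv.
  have h5 : B * rho ^+ n * nq (v - Q v) <= B * rho ^+ n * (rho * nq v).
    by apply: ler_wpM2l => //; apply: mulr_ge0 => //; apply: exprn_ge0; case/andP: hrho.
  have h6 := nq_ge0 (Y v).
  have h7 := nq_ge0 v.
  rewrite exprS.
  case/andP: hrho => r0 r1.
  have h8 : rho * nq (Y v) <= nq (Y v).
    by rewrite -[X in _ <= X]mul1r ler_wpM2r // ltW.
  set X := nq (Y v) in h1 h2 h6 h8 *.
  set W := B * rho ^+ n * nq (v - Q v) in h3 h5.
  have -> : B * (rho * rho ^+ n) * nq v = B * rho ^+ n * (rho * nq v) by ring.
  lra.
move=> v Mv; apply: nq0.
apply/eqP; rewrite eq_le nq_ge0 andbT.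
apply: (@geo0 _ (B * nq v) rho hrho) => n.
by rewrite mulrAC; apply: ind.
Qed.

End Hilb.

End PilotAux.
Import PilotAux.

Theorem proposition4p8
  (R : realType) (H : completeNormedModType R[i]) (ip : H -> H -> R[i])
  (T Ts D Ds ts Sp Spi Sm Smi : H -> H)
  (Hip : is_inner_product ip)
  (Hsep : separable_space H) (Hinf : infinite_dimensional H)
  (Tlin : linear T) (Tcontr : forall x, `|T x| <= `|x|) (Tcnu : cnu T)
  (HTs : is_adjoint ip T Ts)
  (HD : is_pos_sqrt_on ip setT (fun x => x - Ts (T x)) D)
  (HDs : is_pos_sqrt_on ip setT (fun x => x - T (Ts x)) Ds) :
  let K := [set x : H | x - Ts (T x) = 0] in
  let Ks := [set x : H | x - T (Ts x) = 0] in
  let Kp := orth ip K in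
  let Ksp := orth ip Ks in
  (exists2 k : R[i], k < 1 & forall x, Kp x -> `|T x| <= k * `|x|) ->
  (forall y, Ksp y -> Kp (ts y)) ->
  (forall x y, Kp x -> Ksp y -> ip (T x) y = ip x (ts y)) ->
  is_pos_sqrt_on ip Kp (fun x => x - ts (T x)) Sp -> is_inverse_on Kp Sp Spi ->
  is_pos_sqrt_on ip Ksp (fun y => y - T (ts y)) Sm -> is_inverse_on Ksp Sm Smi ->
  forall (lam : R[i]) (Rl : H -> H), `|lam| < 1 ->
  (forall x, Rl (x - lam *: Ts x) = x) ->
  (forall y, Rl y - lam *: Ts (Rl y) = y) ->
  forall a : H * H,
  (exists x : H, a = (x, lam *: x)) ->
  (forall k, K k -> sympl ip a (k, T k) = 0) ->
  forall x0 ap am : H, K x0 -> Kp ap -> Ksp am ->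
  a = (x0 + ap, T x0 + am) ->
  let Gp' := Spi ap - ts (Smi am) in
  let Gm' := T (Spi ap) - Smi am in
  Gm' = T Gp' - lam *: Ds (Rl (D Gp')).
Proof.
move=> K Ks Kp Ksp [k k1 hk] htsM htsA [SpM Spsa Sppos Sp2] [SpiM SpSpi SpiSp]
  [SmM Smsa Smpos Sm2] [SmiM SmSmi SmiSm] lam Rl hlam Rl1 Rl2 a [x ->] _ x0 ap am
  Kx0 Kap Kam [ex1 ex2] Gp' Gm'.
rewrite /Gp' /Gm' {Gp' Gm'}.
case: HD => [_ Dsa Dpos D2]; case: HDs => [_ Dssa Dspos Ds2].
have Dsa' : forall x y, ip (D x) y = ip x (D y) by move=> ? ?; apply: Dsa.
have Dssa' : forall x y, ip (Ds x) y = ip x (Ds y) by move=> ? ?; apply: Dssa.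
have D2' : forall x, D (D x) = x - Ts (T x) by move=> ?; apply: D2.
have Ds2' : forall x, Ds (Ds x) = x - T (Ts x) by move=> ?; apply: Ds2.
have subT : subsp (setT : set H) by [].
have Dlin : forall c u v, D (c *: u + v) = c *: D u + D v.
  by move=> c u v; apply: (sa_lin Hip subT) => // ? ? _ _; apply: Dsa'.
have Dslin : forall c u v, Ds (c *: u + v) = c *: Ds u + Ds v.
  by move=> c u v; apply: (sa_lin Hip subT) => // ? ? _ _; apply: Dssa'.
have Tl : forall c u v, T (c *: u + v) = c *: T u + T v by move=> c u v; apply: Tlin.
have T0 : T 0 = 0.
  have := Tl 1 0 0; rewrite !scale1r !addr0 => /eqP.
  by rewrite -subr_eq0 opprD addrA subrr add0r oppr_eq0 => /eqP.
have TB : forall u v, T (u - v) = T u - T v.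
  by move=> u v; rewrite addrC -scaleN1r Tl scaleN1r addrC.
have Tsl : forall c u v, Ts (c *: u + v) = c *: Ts u + Ts v.
  move=> c u v.
  have key : forall w, ip w (Ts (c *: u + v)) = ip w (c *: Ts u + Ts v).
    move=> w; rewrite -HTs (ipDr Hip) (ipZr Hip) (ipDr Hip) (ipZr Hip) -!HTs //.
  apply/eqP; rewrite -subr_eq0; apply/eqP; apply: (ipxx0 Hip).
  by rewrite (ipBr Hip) key subrr.
have Ts0 : Ts 0 = 0.
  have := Tsl 1 0 0; rewrite !scale1r !addr0 => /eqP.
  by rewrite -subr_eq0 opprD addrA subrr add0r oppr_eq0 => /eqP.
have TsB : forall u v, Ts (u - v) = Ts u - Ts v.
  by move=> u v; rewrite addrC -scaleN1r Tsl scaleN1r addrC.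
have TsZ : forall c u, Ts (c *: u) = c *: Ts u.
  by move=> c u; rewrite -[c *: u]addr0 Tsl Ts0 addr0.
have TsD : forall u v, Ts (u + v) = Ts u + Ts v.
  by move=> u v; rewrite -[u]scale1r Tsl !scale1r.
have DsZ : forall c u, Ds (c *: u) = c *: Ds u.
  move=> c u; rewrite -[c *: u]addr0 Dslin.
  have Ds0 : Ds 0 = 0.
    have := Dslin 1 0 0; rewrite !scale1r !addr0 => /eqP.
    by rewrite -subr_eq0 opprD addrA subrr add0r oppr_eq0 => /eqP.
  by rewrite Ds0 addr0.
have DsD : forall u v, Ds (u + v) = Ds u + Ds v.
  by move=> u v; rewrite -[u]scale1r Dslin !scale1r.
have DB : forall u v, D (u - v) = D u - D v.
  by move=> u v; rewrite addrC -scaleN1r Dlin scaleN1r addrC.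

have TsE : forall x y, ip x (Ts y) = ip (T x) y by move=> ? ?; rewrite HTs.
have subKp : subsp Kp.
  move=> c u v Ku Kv y Ky; by rewrite (ipL Hip) Ku // Kv // mulr0 addr0.
have subKsp : subsp Ksp.
  move=> c u v Ku Kv y Ky; by rewrite (ipL Hip) Ku // Kv // mulr0 addr0.
have Dk0 : forall u, K u -> D u = 0.
  move=> u Ku; apply: (ipxx0 Hip); rewrite Dsa' D2'.
  by move: Ku; rewrite /K /= => ->; rewrite (ip0r Hip).
have Dsk0 : forall u, Ks u -> Ds u = 0.
  move=> u Ku; apply: (ipxx0 Hip); rewrite Dssa' Ds2'.
  by move: Ku; rewrite /Ks /= => ->; rewrite (ip0r Hip).
have DKp : forall u, Kp u -> Kp (D u).
  by move=> u Ku y Ky; rewrite Dsa' Dk0 // (ip0r Hip).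
have DsKsp : forall u, Ksp u -> Ksp (Ds u).
  by move=> u Ku y Ky; rewrite Dssa' Dsk0 // (ip0r Hip).
have TK : forall u, K u -> Ks (T u).
  move=> u Ku; rewrite /Ks /= -TB.
  by move: Ku; rewrite /K /= => ->.
have TsKs : forall u, Ks u -> K (Ts u).
  move=> u Ku; rewrite /K /= -TsB.
  by move: Ku; rewrite /Ks /= => ->.
have TKp : forall u, Kp u -> Ksp (T u).
  by move=> u Ku y Ky; rewrite HTs Ku //; apply: TsKs.
have TsKsp : forall u, Ksp u -> Kp (Ts u).
  move=> u Ku y Ky.
  rewrite (ipC Hip) TsE.
  by rewrite (ipC Hip) Ku ?rmorph0 //; apply: TK.
have tsE : forall y, Ksp y -> ts y = Ts y.
  move=> y Ky; apply/eqP; rewrite -subr_eq0; apply/eqP.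
  apply: (@ext_M _ _ _ Hip Kp).
    by apply: (subspB subKp); [apply: htsM | apply: TsKsp].
  move=> w Kw; rewrite (ipBl Hip) (ipC Hip) -htsA // (ipC Hip w (Ts y)) TsE.
  by rewrite subrr.
have Sp2' : forall u, Kp u -> Sp (Sp u) = u - Ts (T u).
  by move=> u Ku; rewrite Sp2 // tsE //; apply: TKp.
have Sm2' : forall u, Ksp u -> Sm (Sm u) = u - T (Ts u).
  by move=> u Ku; rewrite Sm2 // tsE.

have n0 : forall u : H, 0 <= re `|u| by move=> u; apply: re_ge0; apply: normr_ge0.
have [kap [kap0 kap1 hkap]] : exists kap : R,
    [/\ 0 <= kap, kap < 1 & forall u, Kp u -> nq ip (T u) <= kap * nq ip u].
  have kreal : k = ((re k)%:C)%C.
    move: k1 hk; rewrite ltcE => /andP[/eqP hIm _].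
    by case: k hIm => ka kb /= <-.
  have r1 : re k < 1 by move: k1; rewrite ltcE => /andP[_].
  have hk' : forall u, Kp u -> re `|T u| <= re k * re `|u|.
    move=> u Ku; rewrite -reM_real -kreal; apply: re_le; exact: hk.
  case: (lerP 0 (re k)) => r0.
  - exists (re k ^+ 2); split; first exact: exprn_ge0.
      by rewrite expr2; nra.
    move=> u Ku; rewrite !(nq_norm Hip).
    have := hk' u Ku; have := n0 (T u); have := n0 u; nra.
  - exists 0; split => //.
    move=> u Ku; rewrite mul0r (nq_norm Hip).
    have h1 := hk' u Ku; have h2 := n0 (T u); have h3 := n0 u.
    have h4 : re k * re `|u| <= 0 by apply: mulr_le0_ge0 => //; exact: ltW.
    have -> : re `|T u| = 0 by apply/eqP; rewrite eq_le h2 andbT; exact: le_trans h1 h4.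
    by rewrite expr0n.
pose rho : R := (1 + kap) / 2.
have rho0 : 0 <= rho < 1 by apply/andP; split; rewrite /rho; lra.
have kaprho : kap <= rho by rewrite /rho; lra.
have nqT : forall u, nq ip (T u) <= nq ip u by move=> u; apply: (nq_le Hip).
have nqTsT : forall y, nq ip (Ts y) = rp ip (T (Ts y)) y by move=> y; rewrite /nq /rp HTs.
have nqTs : forall y, nq ip (Ts y) <= nq ip y.
  move=> y; have := nq_ge0 Hip (T (Ts y) - y); rewrite (nqB Hip) -nqTsT.
  have := nqT (Ts y); lra.
have nqTsk : forall y, Ksp y -> nq ip (Ts y) <= rho * nq ip y.
  move=> y Ky; have := nq_ge0 Hip (T (Ts y) - y); rewrite (nqB Hip) -nqTsT.
  have := hkap (Ts y) (TsKsp y Ky).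
  have := nq_ge0 Hip (Ts y); have := nq_ge0 Hip y.
  set X := nq ip (Ts y); set N := nq ip y; set A := nq ip (T (Ts y)).
  move=> hN hX hA h0.
  have e1 : (2 - kap) * X <= N by lra.
  have e2 : (1 + kap) * ((2 - kap) * X) <= (1 + kap) * N.
    by apply: ler_wpM2l => //; lra.
  have e3 : 0 <= kap * (1 - kap) * X.
    by apply: mulr_ge0 => //; apply: mulr_ge0 => //; lra.
  rewrite /rho; lra.
have Sp_nq : forall u, Kp u -> nq ip (Sp u) = nq ip u - nq ip (T u).
  move=> u Ku; rewrite /nq Spsa ?Sp2' ?(ipBr Hip) ?TsE ?reB //; exact: SpM.
have D_nq : forall u, nq ip (D u) = nq ip u - nq ip (T u).
  by move=> u; rewrite /nq Dsa' D2' (ipBr Hip) TsE reB.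
have Sm_nq : forall y, Ksp y -> nq ip (Sm y) = nq ip y - nq ip (Ts y).
  move=> y Ky; have KSy := SmM y Ky.
  rewrite {1}/nq Smsa // Sm2' // (ipBr Hip) reB.
  by rewrite -/(rp ip y (T (Ts y))) (rpC Hip) -nqTsT.
have Ds_nq : forall y, nq ip (Ds y) = nq ip y - nq ip (Ts y).
  move=> z; rewrite {1}/nq Dssa' Ds2' (ipBr Hip) reB.
  by rewrite -/(rp ip z (T (Ts z))) (rpC Hip) -nqTsT.
have cSp : forall u, Kp u -> nq ip (u - Sp u) <= rho * nq ip u.
  apply: (ctr Hip subKp SpM Spsa).
  - by move=> u Ku; apply: re_ge0; apply: Sppos.
  - by move=> u Ku; rewrite Sp_nq //; have := nq_ge0 Hip (T u); lra.
  - move=> u Ku; rewrite Sp_nq //; have := hkap u Ku; have := nq_ge0 Hip u; nra.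
have cD : forall u, Kp u -> nq ip (u - D u) <= rho * nq ip u.
  apply: (ctr Hip subKp DKp (fun x y _ _ => Dsa' x y)).
  - by move=> u Ku; apply: re_ge0; apply: Dpos.
  - by move=> u Ku; rewrite D_nq //; have := nq_ge0 Hip (T u); lra.
  - move=> u Ku; rewrite D_nq //; have := hkap u Ku; have := nq_ge0 Hip u; nra.
have cSm : forall u, Ksp u -> nq ip (u - Sm u) <= rho * nq ip u.
  apply: (ctr Hip subKsp SmM Smsa).
  - by move=> u Ku; apply: re_ge0; apply: Smpos.
  - by move=> u Ku; rewrite Sm_nq //; have := nq_ge0 Hip (Ts u); lra.
  - by move=> u Ku; rewrite Sm_nq //; have := nqTsk u Ku; lra.
have cDs : forall u, Ksp u -> nq ip (u - Ds u) <= rho * nq ip u.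
  apply: (ctr Hip subKsp DsKsp (fun x y _ _ => Dssa' x y)).
  - by move=> u Ku; apply: re_ge0; apply: Dspos.
  - by move=> u Ku; rewrite Ds_nq //; have := nq_ge0 Hip (Ts u); lra.
  - by move=> u Ku; rewrite Ds_nq //; have := nqTsk u Ku; lra.

have DsB : forall u v, Ds (u - v) = Ds u - Ds v.
  by move=> u v; rewrite addrC -scaleN1r Dslin scaleN1r addrC.
have U1 : forall v, Kp v -> D v = Sp v.
  move=> v Kv; apply/eqP; rewrite eq_sym -subr_eq0; apply/eqP.
  apply: (sylv Hip (M1:=Kp) (M2:=Kp) (P:=D) (Q:=Sp) (Y:=fun v => Sp v - D v) (B:=4)
    rho0 _ cD cSp SpM _ _ _ _ _ Kv) => //.
  - by move=> u w Ku Kw; apply: (subspB subKp).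
  - by move=> u Ku; apply: (subspB subKp); [apply: SpM | apply: DKp].
  - by move=> u w Ku Kw /=; rewrite (sa_sub Hip subKp SpM Spsa Ku Kw) DB; exact: zz1.
  - move=> u Ku /=; have := nq_par Hip (Sp u) (- D u); rewrite (nqN Hip) Sp_nq // D_nq.
    have := nq_ge0 Hip (T u); lra.
  - by move=> u Ku /=; rewrite DB D2' Sp2' //; exact: zz2.
have U2 : forall v, Ksp v -> Ds v = Sm v.
  move=> v Kv; apply/eqP; rewrite eq_sym -subr_eq0; apply/eqP.
  apply: (sylv Hip (M1:=Ksp) (M2:=Ksp) (P:=Ds) (Q:=Sm) (Y:=fun v => Sm v - Ds v) (B:=4)
    rho0 _ cDs cSm SmM _ _ _ _ _ Kv) => //.
  - by move=> u w Ku Kw; apply: (subspB subKsp).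
  - by move=> u Ku; apply: (subspB subKsp); [apply: SmM | apply: DsKsp].
  - by move=> u w Ku Kw /=; rewrite (sa_sub Hip subKsp SmM Smsa Ku Kw) DsB; exact: zz1.
  - move=> u Ku /=; have := nq_par Hip (Sm u) (- Ds u); rewrite (nqN Hip) Sm_nq // Ds_nq.
    have := nq_ge0 Hip (Ts u); lra.
  - by move=> u Ku /=; rewrite DsB Ds2' Sm2' //; exact: zz2.
have I : forall v, Ksp v -> Sp (Ts v) = Ts (Sm v).
  move=> v Kv; apply/eqP; rewrite eq_sym -subr_eq0; apply/eqP.
  apply: (sylv Hip (M1:=Kp) (M2:=Ksp) (P:=Sp) (Q:=Sm)
    (Y:=fun v => Ts (Sm v) - Sp (Ts v)) (B:=4)
    rho0 _ cSp cSm SmM _ _ _ _ _ Kv) => //.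
  - by move=> u w Ku Kw; apply: (subspB subKsp).
  - move=> u Ku; apply: (subspB subKp); first by apply: TsKsp; apply: SmM.
    by apply: SpM; apply: TsKsp.
  - move=> u w Ku Kw /=; rewrite (sa_sub Hip subKsp SmM Smsa Ku Kw) !TsB.
    by rewrite (sa_sub Hip subKp SpM Spsa (TsKsp _ Ku) (TsKsp _ Kw)); exact: zz1.
  - move=> u Ku /=; have := nq_par Hip (Ts (Sm u)) (- Sp (Ts u)).
    rewrite (nqN Hip) Sp_nq; last by apply: TsKsp.
    have := nqTs (Sm u); rewrite Sm_nq //.
    have := nq_ge0 Hip u; have := nq_ge0 Hip (T (Ts u)); have := nqTs u; lra.
  - move=> u Ku /=.
    rewrite (sa_sub Hip subKp SpM Spsa (TsKsp _ (SmM _ Ku)) (SpM _ (TsKsp _ Ku))).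
    by rewrite Sp2' ?Sm2' ?TsB //; [exact: zz2 | apply: TsKsp].
set w := Smi am.
have Kw : Ksp w by apply: SmiM.
set s := Spi ap.
have Kss : Kp s by apply: SpiM.
rewrite tsE //.
have hDg : D (s - Ts w) = ap - Ts am.
  rewrite DB U1 // U1; last by apply: TsKsp.
  by rewrite I // SpSpi // SmSmi.
have hT0 : Ts (T x0) = x0.
  by move: Kx0; rewrite /K /= => /eqP; rewrite subr_eq0 => /eqP <-.
have hx : ap - Ts am = x - lam *: Ts x.
  rewrite -TsZ ex2 TsD hT0 ex1.
  by rewrite opprD addrACA subrr add0r.
rewrite hDg hx Rl1.
have hlx : lam *: Ds x = Sm am.
  rewrite -DsZ ex2 DsD Dsk0 ?add0r ?U2 //; exact: TK.
have hSm : Sm am = w - T (Ts w) by rewrite -Sm2' // /w SmSmi.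
rewrite hlx hSm TB.
by rewrite opprB addrA subrK.
Qed.
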